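(* Let $n\geq 5$ be an odd integer. Then $\beta_3(J_n)=3n$.
   Context: Flower snark $J_n$ ($n\geq 5$ odd): take $n$ disjoint stars $K_{1,3}$, the $i$th with vertices $T_i=\{a_i,b_i,c_i,d_i\}$, centre $b_i$ and leaves $a_i,c_i,d_i$; add the cycle $a_1a_2\cdots a_na_1$ and the cycle $c_1c_2\cdots c_nd_1d_2\cdots d_nc_1$. $d$ is the shortest-path distance, $d(s,X)=\min_{x\in X}d(s,x)$ for nonempty $X$, $\mathcal{D}_S(X)=(d(s_1,X),\dots,d(s_k,X))$. $S$ is a $\{3\}$-resolving set if $\mathcal{D}_S(X)\neq\mathcal{D}_S(Y)$ for all distinct nonempty vertex sets $X,Y$ with $|X|,|Y|\leq 3$; $\beta_3(J_n)$ is the minimum size of such a set. *)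

(* Defs.v *)
From mathcomp Require Import all_boot all_order.
Set Implicit Arguments. Unset Strict Implicit. Unset Printing Implicit Defensive.

(* Vertices of the flower snark J_n: (i, t) with i : 'I_n (0-indexed star
   number) and t : 'I_4 encoding  0 = a_i, 1 = b_i (centre), 2 = c_i, 3 = d_i. *)
Definition vert (n : nat) : finType := ('I_n * 'I_4)%type.

Definition snark_e0 (n : nat) (x y : vert n) : bool :=
  let i := nat_of_ord x.1 in let t := nat_of_ord x.2 in
  let j := nat_of_ord y.1 in let u := nat_of_ord y.2 in
  [||
      [&& t == 1, u != 1 & i == j],
      [&& t == 0, u == 0 & j == (i + 1) %% n],
      (* cycle c_1 ... c_n d_1 ... d_n c_1 *)
      [&& t == 2, u == 2, i + 1 < n & j == i + 1],
      [&& t == 2, u == 3, i + 1 == n & j == 0],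
      [&& t == 3, u == 3, i + 1 < n & j == i + 1]
    | [&& t == 3, u == 2, i + 1 == n & j == 0]].

Definition snark_adj (n : nat) (x y : vert n) : bool :=
  snark_e0 x y || snark_e0 y x.

Fixpoint ball (n : nat) (k : nat) (u : vert n) : {set vert n} :=
  match k with
  | 0 => [set u]
  | k'.+1 => ball k' u :|: [set y | [exists x in ball k' u, snark_adj x y]]
  end.

(* Shortest-path distance: least k with v in ball k u (J_n is connected, so
   this is < #|vert n|; unreachable would give #|vert n|). *)
Definition dist (n : nat) (u v : vert n) : nat :=
  find (fun k => v \in ball k u) (iota 0 #|vert n|).

Definition dist_set (n : nat) (s : vert n) (X : {set vert n}) : nat :=
  \big[minn/#|vert n|]_(x in X) dist s x.

Definition three_resolving (n : nat) (S : {set vert n}) : Prop :=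
  forall X Y : {set vert n},
    X != set0 -> Y != set0 -> #|X| <= 3 -> #|Y| <= 3 -> X != Y ->
    exists2 s, s \in S & dist_set s X != dist_set s Y.

(* Main.v *)
Require Import Defs.
From mathcomp Require Import all_boot all_order zify.
Set Implicit Arguments. Unset Strict Implicit. Unset Printing Implicit Defensive.


Section D.
Variable n : nat.
Hypothesis n_gt0 : 0 < n.
Local Notation V := (vert n).
Local Notation N := #|vert n|.

Lemma N_ge4 : 4 <= N.
Proof. have := n_gt0; rewrite /vert card_prod !card_ord; lia. Qed.

Lemma adjC (x y : V) : snark_adj x y = snark_adj y x.
Proof. by rewrite /snark_adj orbC. Qed.

Lemma ball_mono (u : V) k l : k <= l -> ball k u \subset ball l u.
Proof.
elim: l => [|l IH]; first by rewrite leqn0 => /eqP ->.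
rewrite leq_eqVlt => /orP[/eqP -> //| ]; rewrite ltnS => /IH H.
apply: subset_trans H _; rewrite /=; exact: subsetUl.
Qed.

Lemma dist_le_N (u v : V) : dist u v <= N.
Proof. by rewrite /dist -[X in _ <= X](size_iota 0 N) find_size. Qed.

Lemma dist_le (u v : V) k : k < N -> v \in ball k u -> dist u v <= k.
Proof.
move=> kN Hv; rewrite leqNgt; apply/negP => Hlt.
have := before_find 0 Hlt; rewrite nth_iota // add0n Hv; done.
Qed.

Lemma dist_in (u v : V) : dist u v < N -> v \in ball (dist u v) u.
Proof.
move=> H.
have Hh : has (fun k => v \in ball k u) (iota 0 N).
  by rewrite has_find size_iota.
have := nth_find 0 Hh; rewrite nth_iota ?add0n //.
Qed.

Lemma dist_self (u : V) : dist u u = 0.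
Proof.
apply/eqP; rewrite -leqn0; apply: dist_le; first by have := N_ge4; lia.
by rewrite /= in_set1.
Qed.

Lemma dist0 (u v : V) : dist u v = 0 -> v = u.
Proof.
move=> H; have : dist u v < N by rewrite H; have := N_ge4; lia.
by move/dist_in; rewrite H /= in_set1 => /eqP.
Qed.

Lemma dist_adj (s z y : V) : snark_adj z y -> dist s y <= (dist s z).+1.
Proof.
move=> Hzy.
have [Hlt|Hge] := ltnP (dist s z) N; last first.
  by apply: leq_trans (dist_le_N s y) _; apply: leq_trans Hge _.
have Hz := dist_in Hlt.
have Hy : y \in ball (dist s z).+1 s.
  rewrite /= inE; apply/orP; right; rewrite inE; apply/existsP; exists z.
  by rewrite Hz Hzy.
have [H2|H2] := ltnP (dist s z).+1 N; first exact: dist_le.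
by apply: leq_trans (dist_le_N s y) _.
Qed.

Lemma dist_back (s z : V) : z != s ->
  dist s z = N \/ exists z', snark_adj z' z /\ (dist s z').+1 <= dist s z.
Proof.
move=> Hzs.
have [Hlt|Hge] := ltnP (dist s z) N; last first.
  by left; apply/eqP; rewrite eqn_leq dist_le_N.
right; have Hz := dist_in Hlt.
move: Hz Hlt; case E: (dist s z) => [|d].
  by move=> _ _; move: (dist0 E) Hzs => ->; rewrite eqxx.
move=> /= Hz Hlt; move: Hz; rewrite inE => /orP[Hz|].
  have := dist_le (ltnW Hlt) Hz; rewrite E; lia.
rewrite inE => /existsP[x /andP[Hx Hxz]].
exists x; split=> //; have := dist_le (ltnW Hlt) Hx; lia.
Qed.

Lemma dist_le1 (s z : V) : dist s z <= 1 -> z = s \/ snark_adj s z.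
Proof.
move=> H; have HN : dist s z < N by have := N_ge4; lia.
have Hz := dist_in HN.
have : z \in ball 1 s by apply: (subsetP (ball_mono s H)).
rewrite /= !inE => /orP[/eqP -> | /existsP[x]]; first by left.
by rewrite inE => /andP[/eqP -> ?]; right.
Qed.

Lemma dist_adj1 (s z : V) : snark_adj s z -> dist s z <= 1.
Proof. by move/(dist_adj s); rewrite dist_self. Qed.

Lemma bigmin_le_seq (I : eqType) (r : seq I) (P : pred I) (F : I -> nat) m x :
  x \in r -> P x -> \big[minn/m]_(i <- r | P i) F i <= F x.
Proof.
elim: r => [//|a r IH]; rewrite inE big_cons => /orP[/eqP <- -> | Hx Px].
  by rewrite geq_minl.
by case: (P a); rewrite ?geq_min IH ?orbT.
Qed.

Lemma dset_le (s x : V) (X : {set V}) : x \in X -> dist_set s X <= dist s x.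
Proof. by move=> Hx; rewrite /dist_set; apply: bigmin_le_seq; rewrite ?mem_index_enum. Qed.

Lemma dset_le_N (s : V) (X : {set V}) : dist_set s X <= N.
Proof.
rewrite /dist_set; elim/big_ind: _ => //.
by move=> a b Ha Hb; rewrite geq_min Ha.
by move=> i _; apply: dist_le_N.
Qed.

Lemma dset_ge (s : V) (X : {set V}) m : m <= N -> (forall y, y \in X -> m <= dist s y) ->
  m <= dist_set s X.
Proof.
move=> HN H; rewrite /dist_set; elim/big_ind: _ => //.
by move=> a b Ha Hb; rewrite leq_min Ha.
Qed.

Lemma dset_le_set (s : V) (X Y : {set V}) : (forall y, y \in Y -> dist_set s X <= dist s y) ->
  dist_set s X <= dist_set s Y.
Proof. by move=> H; apply: dset_ge => //; apply: dset_le_N. Qed.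

Lemma dset0 (s : V) (X : {set V}) : s \in X -> dist_set s X = 0.
Proof. by move=> H; apply/eqP; rewrite -leqn0 -(dist_self s) dset_le. Qed.

Lemma dset_pos (s : V) (X : {set V}) : s \notin X -> 0 < dist_set s X.
Proof.
move=> H; apply: dset_ge; first by have := N_ge4; lia.
move=> y Hy; rewrite lt0n; apply/eqP=> /dist0 E; subst y; by rewrite Hy in H.
Qed.

Lemma dset_le1 (s : V) (X : {set V}) : dist_set s X <= 1 -> exists2 y, y \in X & (y = s \/ snark_adj s y).
Proof.
move=> H.
case E: [exists y, (y \in X) && (dist s y <= 1)].
  move/existsP: E => [y /andP[Hy Hd]].
  exists y => //; exact: (dist_le1 Hd).
have : 2 <= dist_set s X.
  apply: dset_ge; first by have := N_ge4; lia.
  move=> y Hy; rewrite ltnNge; apply/negP=> Hd.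
  move/negbT/negP: E; apply; apply/existsP; exists y; by rewrite Hy Hd.
lia.
Qed.

End D.

Definition E0 (n i t j u : nat) : bool :=
  [|| [&& t == 1, u != 1 & i == j],
      [&& t == 0, u == 0 & j == (i + 1) %% n],
      [&& t == 2, u == 2, i + 1 < n & j == i + 1],
      [&& t == 2, u == 3, i + 1 == n & j == 0],
      [&& t == 3, u == 3, i + 1 < n & j == i + 1]
    | [&& t == 3, u == 2, i + 1 == n & j == 0]].

Definition A0 n i t j u := E0 n i t j u || E0 n j u i t.

Lemma adjE n (x y : vert n) : snark_adj x y = A0 n x.1 x.2 y.1 y.2.
Proof. by []. Qed.

Lemma modS i n : i < n -> (i + 1) %% n = if i + 1 == n then 0 else i + 1.
Proof.
move=> H; case: eqP => [->|Hn]; first by rewrite modnn.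
by rewrite modn_small //; lia.
Qed.

Ltac solve_nat Hi Hj :=
  rewrite /A0 /E0 ?(modS Hi) ?(modS Hj);
  repeat (case: ifP => ?); rewrite /=; lia.

Lemma K_centre n i t j u : 5 <= n -> i < n -> j < n -> t < 4 -> u < 4 ->
  A0 n i t j u -> u = 1 -> t != 1 /\ j = i.
Proof.
move=> Hn Hi Hj Ht Hu H Hu1; subst u.
move: t Ht H => [|[|[|[|//]]]] _; solve_nat Hi Hj.
Qed.

Lemma K_nc n i t j u : 5 <= n -> i < n -> j < n -> t < 4 -> u < 4 ->
  A0 n i t j u -> t != 1 -> u != 1 ->
  [/\ (j == (i + 1) %% n) || (i == (j + 1) %% n) & (t == 0) = (u == 0)].
Proof.
move=> Hn Hi Hj Ht Hu H.
move: t Ht H => [|[|[|[|//]]]] _; move: u Hu => [|[|[|[|//]]]] _ H _ _ //;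
  move: H; solve_nat Hi Hj.
Qed.

Lemma K_cd n i j u : 5 <= n -> i < n -> j < n -> u < 4 -> u != 1 ->
  A0 n i 2 j u -> A0 n i 3 j u -> False.
Proof.
move=> Hn Hi Hj Hu.
move: u Hu => [|[|[|[|//]]]] _ Hu1; solve_nat Hi Hj.
Qed.

Lemma K_same n i t u : 5 <= n -> i < n -> t < 4 -> u < 4 ->
  A0 n i t i u -> t != 1 -> u != 1 -> False.
Proof.
move=> Hn Hi Ht Hu H.
move: t Ht H => [|[|[|[|//]]]] _; move: u Hu => [|[|[|[|//]]]] _ H _ _ //;
  move: H; solve_nat Hi Hi.
Qed.

Definition nxt_t n i t := if i + 1 < n then t else if t == 0 then 0 else 5 - t.

Lemma F3 n i t : 5 <= n -> i < n -> t < 4 -> t != 1 ->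
  [/\ A0 n i t ((i + 1) %% n) (nxt_t n i t), nxt_t n i t < 4 & nxt_t n i t != 1].
Proof.
move=> Hn Hi Ht.
move: t Ht => [|[|[|[|//]]]] _ Ht1; rewrite /nxt_t; split; solve_nat Hi Hi.
Qed.

Section M.
Variable n : nat.
Hypothesis Hn : 5 <= n.
Local Notation V := (vert n).
Local Notation N := #|vert n|.

Lemma n_gt0 : 0 < n. Proof. lia. Qed.

Lemma vE (x y : V) : x = y <-> (x.1 = y.1 :> nat /\ x.2 = y.2 :> nat).
Proof.
split=> [->//|[H1 H2]]; case: x y H1 H2 => [a b] [c d] /= H1 H2.
by rewrite (val_inj H1) (val_inj H2).
Qed.

Lemma adj_centre (z x : V) : snark_adj z x -> x.2 = 1 :> nat -> z.2 != 1 :> nat /\ z.1 = x.1.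
Proof.
rewrite adjE => H Hx.
have [] := K_centre Hn (ltn_ord z.1) (ltn_ord x.1) (ltn_ord z.2) (ltn_ord x.2) H Hx.
by move=> -> E; split=> //; apply: val_inj.
Qed.

Definition nb (i j : nat) := (j == (i + 1) %% n) || (i == (j + 1) %% n).

Lemma adj_nc (v z : V) : snark_adj v z -> v.2 != 1 :> nat -> z.2 != 1 :> nat ->
  nb v.1 z.1 /\ (v.2 == 0 :> nat) = (z.2 == 0 :> nat).
Proof.
rewrite adjE => H H1 H2.
by have [] := K_nc Hn (ltn_ord v.1) (ltn_ord z.1) (ltn_ord v.2) (ltn_ord z.2) H H1 H2.
Qed.

Lemma star (x y : V) : x.1 = y.1 -> x.2 = 1 :> nat -> y.2 != 1 :> nat -> snark_adj x y.
Proof.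
move=> E1 E2 E3; rewrite adjE /A0 /E0; apply/orP; left; apply/orP; left.
by rewrite E1 E2 E3 /= !eqxx.
Qed.

Definition b1 : 'I_4 := Ordinal (isT : 1 < 4).

Definition cen (v : V) : V := (v.1, b1).

Lemma F3v (z : V) : z.2 != 1 :> nat ->
  exists y : V, [/\ snark_adj z y, y.2 != 1 :> nat & nb z.1 y.1].
Proof.
move=> Hz.
have [H1 H2 H3] := F3 Hn (ltn_ord z.1) (ltn_ord z.2) Hz.
exists (Ordinal (ltn_pmod (z.1 + 1) n_gt0), Ordinal H2); split => //.
by rewrite /nb /= eqxx.
Qed.

Definition Aset (i : nat) : {set V} := [set x : V | (x.2 == 1 :> nat) && nb i x.1].

Lemma cen_in (v y : V) : y.2 != 1 :> nat -> nb v.1 y.1 -> cen y \in Aset v.1.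
Proof. by move=> H1 H2; rewrite inE /= H2. Qed.

Lemma adj_cen (y : V) : y.2 != 1 :> nat -> snark_adj y (cen y).
Proof. by move=> H; rewrite adjC; apply: star. Qed.

Lemma claim (v s : V) (Z : {set V}) : v.2 != 1 :> nat -> Aset v.1 \subset Z -> s != v ->
  (s = cen v -> exists2 t, t \in Z & snark_adj s t) -> dist_set s Z <= dist s v.
Proof.
move=> Hv HA Hsv Hc.
have P := n_gt0.
have Hvs : v != s by rewrite eq_sym.
have [HN|[z [Hzv Hd]]] := dist_back P Hvs.
  by rewrite HN; apply: dset_le_N.
case: (boolP (z.2 == 1 :> nat)) => Hz2.
  have Hvz : snark_adj v z by rewrite adjC.
  have [_ Hz1] := adj_centre Hvz (eqP Hz2).
  have Ez : z = cen v by apply/vE; rewrite /= Hz1 (eqP Hz2).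
  case: (eqVneq s z) => [Esz | Hsz].
    have [t Ht Hst] := Hc (etrans Esz Ez).
    apply: leq_trans (dset_le s Ht) _.
    apply: leq_trans (dist_adj1 P Hst) _; lia.
  have Hzs : z != s by rewrite eq_sym.
  have [HN|[z' [Hz'z Hd']]] := dist_back P Hzs.
    have := dist_le_N s v; lia.
  have [Hz'2 Hz'1] := adj_centre Hz'z (eqP Hz2).
  have [y [Hz'y Hy2 Hnb]] := F3v Hz'2.
  have Hx : cen y \in Z.
    apply: (subsetP HA); apply: cen_in => //; by rewrite Hz1 -Hz'1.
  apply: leq_trans (dset_le s Hx) _.
  have := dist_adj s (adj_cen Hy2); have := dist_adj s Hz'y; lia.
have Hvz : snark_adj v z by rewrite adjC.
have [Hnb _] := adj_nc Hvz Hv Hz2.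
have Hx : cen z \in Z by apply: (subsetP HA); apply: cen_in.
apply: leq_trans (dset_le s Hx) _.
have := dist_adj s (adj_cen Hz2); lia.
Qed.

Lemma modP i : i < n -> (i + n - 1) %% n = if i == 0 then n - 1 else i - 1.
Proof.
move=> Hi; case: eqP => [->|H].
  by rewrite add0n modn_small //; lia.
have -> : i + n - 1 = (i - 1) + n by lia.
by rewrite modnDr modn_small //; lia.
Qed.

Lemma nb_cases i j : i < n -> j < n -> nb i j -> j = (i + 1) %% n \/ j = (i + n - 1) %% n.
Proof.
move=> Hi Hj; rewrite /nb (modS Hi) (modS Hj) (modP Hi).
repeat case: ifP => ?; lia.
Qed.

Definition nx (i : 'I_n) : 'I_n := Ordinal (ltn_pmod (i + 1) n_gt0).
Definition pv (i : 'I_n) : 'I_n := Ordinal (ltn_pmod (i + n - 1) n_gt0).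

Lemma Aset_sub (i : 'I_n) : Aset i \subset [set (nx i, b1); (pv i, b1)].
Proof.
apply/subsetP => x; rewrite !inE => /andP[H1 H2].
have [E|E] := nb_cases (ltn_ord i) (ltn_ord x.1) H2.
  apply/orP; left; apply/eqP/vE; split => //=; exact: (eqP H1).
apply/orP; right; apply/eqP/vE; split => //=; exact: (eqP H1).
Qed.

Lemma Aset_card (i : 'I_n) : #|Aset i| <= 2.
Proof.
apply: leq_trans (subset_leq_card (Aset_sub i)) _.
by rewrite cards2; case: (_ != _).
Qed.

Lemma Aset_nonempty (i : 'I_n) : (nx i, b1) \in Aset i.
Proof. by rewrite inE /= /nb eqxx. Qed.

Lemma card_U1A (v : V) (i : 'I_n) : #|v |: Aset i| <= 3.
Proof. have := cardsU1 v (Aset i); have := Aset_card i; lia. Qed.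

Lemma lower_one_centre (S : {set V}) (u v : V) : three_resolving S ->
  u.1 = v.1 -> u.2 = 1 :> nat -> v.2 != 1 :> nat -> u \notin S -> v \notin S -> False.
Proof.
move=> HS E1 Hu Hv HuS HvS.
pose X := Aset v.1; pose Y := v |: Aset v.1.
have HXY : X != Y.
  apply/eqP => /setP /(_ v); rewrite !inE eqxx /= (negbTE Hv) //.
have HX0 : X != set0 by apply/set0Pn; exists (nx v.1, b1); exact: Aset_nonempty.
have HY0 : Y != set0 by apply/set0Pn; exists v; rewrite !inE eqxx.
have HX3 : #|X| <= 3 by have := Aset_card v.1; rewrite /X; lia.
have [s Hs Hne] := HS X Y HX0 HY0 HX3 (card_U1A v v.1) HXY.
move/negP: Hne; apply; apply/eqP/anti_leq/andP; split.
  apply: dset_le_set => y; rewrite in_setU1 => /orP[/eqP ->|Hy]; last exact: dset_le.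
  apply: claim => //.
  - by apply/eqP => E; rewrite -E Hs in HvS.
  - move=> Esc; exfalso.
    have : s = u by apply/vE; rewrite Esc /= E1 Hu.
    by move=> E; rewrite -E Hs in HuS.
apply: dset_le_set => y Hy; apply: dset_le; by rewrite in_setU1 Hy orbT.
Qed.

Lemma half (u v s : V) : u.1 = v.1 -> u.2 != 1 :> nat -> v.2 != 1 :> nat -> s != u ->
  dist_set s (v |: Aset v.1) <= dist_set s (u |: Aset u.1).
Proof.
move=> E1 Hu Hv Hsu.
apply: dset_le_set => y; rewrite in_setU1 => /orP[/eqP ->|Hy]; last first.
  by apply: dset_le; rewrite in_setU1 -E1 Hy orbT.
apply: claim => //.
  by apply/subsetP => z Hz; rewrite in_setU1 -E1 Hz orbT.
move=> Esc; exists v; first by rewrite !inE eqxx.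
by rewrite Esc; apply: star.
Qed.

Lemma lower_two (S : {set V}) (u v : V) : three_resolving S ->
  u.1 = v.1 -> u != v -> u.2 != 1 :> nat -> v.2 != 1 :> nat -> u \notin S -> v \notin S -> False.
Proof.
move=> HS E1 Huv Hu Hv HuS HvS.
pose X := u |: Aset u.1; pose Y := v |: Aset v.1.
have HuY : u \notin Y.
  rewrite /Y in_setU1 negb_or Huv /= inE negb_and; apply/orP; left; exact: Hu.
have HXY : X != Y.
  apply/eqP => E; move: HuY; by rewrite -E in_setU1 eqxx.
have HX0 : X != set0 by apply/set0Pn; exists u; rewrite !inE eqxx.
have HY0 : Y != set0 by apply/set0Pn; exists v; rewrite !inE eqxx.
have [s Hs Hne] := HS X Y HX0 HY0 (card_U1A u u.1) (card_U1A v v.1) HXY.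
move/negP: Hne; apply; apply/eqP/anti_leq/andP; split.
  apply: half => //; try by rewrite E1.
  by apply/eqP => E; rewrite -E Hs in HvS.
apply: half => //; try by rewrite E1.
by apply/eqP => E; rewrite -E Hs in HuS.
Qed.

Lemma lower_pair (S : {set V}) (u v : V) : three_resolving S ->
  u.1 = v.1 -> u \notin S -> v \notin S -> u = v.
Proof.
move=> HS E1 HuS HvS; apply/eqP; apply/negPn/negP => Huv.
case: (boolP (u.2 == 1 :> nat)) => Hu; case: (boolP (v.2 == 1 :> nat)) => Hv.
- by move/negP: Huv; apply; apply/eqP/vE; rewrite E1 (eqP Hu) (eqP Hv).
- exact: (lower_one_centre HS E1 (eqP Hu) Hv HuS HvS).
- exact: (lower_one_centre HS (esym E1) (eqP Hv) Hu HvS HuS).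
- exact: (lower_two HS E1 Huv Hu Hv HuS HvS).
Qed.

Lemma lower (S : {set V}) : three_resolving S -> 3 * n <= #|S|.
Proof.
move=> HS.
have Hinj : {in ~: S &, injective (fun v : V => v.1)}.
  by move=> u v; rewrite !inE => Hu Hv E; apply: (lower_pair HS E).
have H1 : #|~: S| <= n.
  rewrite -(card_in_imset Hinj).
  by apply: leq_trans (max_card _) _; rewrite card_ord.
have H2 := cardsC S.
have H3 : #|V| = n * 4 by rewrite /vert card_prod !card_ord.
lia.
Qed.

Definition C0 : {set V} := [set (i, b1) | i : 'I_n].
Definition S0 : {set V} := ~: C0.

Lemma inS0 (v : V) : (v \in S0) = (v.2 != 1 :> nat).
Proof.
rewrite inE; congr negb; apply/imsetP/eqP => [[i _ ->] // | H].
by exists v.1 => //; apply/vE.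
Qed.

Lemma cardS0 : #|S0| = 3 * n.
Proof.
have H1 : #|C0| = n.
  rewrite card_imset ?card_ord //; by move=> i j [].
have H2 := cardsC C0.
have H3 : #|V| = n * 4 by rewrite /vert card_prod !card_ord.
rewrite /S0; lia.
Qed.

Definition vt (i : 'I_n) (t : nat) : V := (i, inord t).

Lemma vt2 i t : t < 4 -> (vt i t).2 = t :> nat.
Proof. by move=> Ht; rewrite /= inordK. Qed.

Lemma distinct_nb (i : 'I_n) t t' (y : V) : t < 4 -> t' < 4 -> t != 1 -> t' != 1 -> t != t' ->
  y.2 != 1 :> nat -> (y = vt i t \/ snark_adj (vt i t) y) ->
  (y = vt i t' \/ snark_adj (vt i t') y) -> False.
Proof.
move=> Ht Ht' H1 H1' Htt' Hy2.
have E := vt2 i Ht; have E' := vt2 i Ht'.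
case=> [Ey|Ha]; case=> [Ey'|Ha'].
- by move/negP: Htt'; apply; rewrite -E -E' -Ey -Ey'.
- move: Ha'; rewrite Ey adjE /= => Ha'.
  rewrite /= in E E'; rewrite E E' in Ha'.
  exact: (K_same Hn (ltn_ord i) Ht' Ht Ha' H1' H1).
- move: Ha; rewrite Ey' adjE /= => Ha.
  rewrite /= in E E'; rewrite E E' in Ha.
  exact: (K_same Hn (ltn_ord i) Ht Ht' Ha H1 H1').
- have HH1 : (vt i t).2 != 1 :> nat by rewrite E.
  have HH2 : (vt i t').2 != 1 :> nat by rewrite E'.
  have [_ T1] := adj_nc Ha HH1 Hy2.
  have [_ T2] := adj_nc Ha' HH2 Hy2.
  move: Ha Ha'; rewrite !adjE /= => Ha Ha'.
  rewrite /= in E E' T1 T2; rewrite E in Ha T1; rewrite E' in Ha' T2.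
  have Hy4 := ltn_ord y.2.
  have Htt : (t = 2 /\ t' = 3) \/ (t = 3 /\ t' = 2).
    move: T1 T2; case: (y.2 == 0 :> nat) => T1 T2; lia.
  case: Htt => [[? ?]|[? ?]]; subst t t'.
  + exact: (K_cd Hn (ltn_ord i) (ltn_ord y.1) Hy4 Hy2 Ha Ha').
  + exact: (K_cd Hn (ltn_ord i) (ltn_ord y.1) Hy4 Hy2 Ha' Ha).
Qed.

Lemma key (X Y : {set V}) (x : V) : x \in X -> x \notin Y -> #|X| <= 3 ->
  exists2 s, s \in S0 & dist_set s X != dist_set s Y.
Proof.
move=> HxX HxY HX3.
have P := n_gt0.
case: (boolP (x.2 == 1 :> nat)) => Hx; last first.
  exists x; first by rewrite inS0.
  by rewrite (dset0 P HxX); have := dset_pos P HxY; lia.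
case: (boolP [exists s, (s \in S0) && (dist_set s X != dist_set s Y)]).
  by move/existsP => [s /andP[]]; exists s.
move=> Hno.
have H s : s \in S0 -> dist_set s X = dist_set s Y.
  move=> Hs; apply/eqP; apply/negPn/negP => Hne.
  by move/negP: Hno; apply; apply/existsP; exists s; rewrite Hs Hne.
have HYX y : y \in Y -> y \in S0 -> y \in X.
  move=> HyY HyS; have := dset0 P HyY; rewrite -(H y HyS).
  case: (boolP (y \in X)) => // HyX; have := dset_pos P HyX; lia.
have Hyt t : t < 4 -> t != 1 ->
    exists y, [/\ y \in X, y.2 != 1 :> nat & (y = vt x.1 t \/ snark_adj (vt x.1 t) y)].
  move=> Ht Ht1.
  have E := vt2 x.1 Ht.
  have HvS : vt x.1 t \in S0 by rewrite inS0 E.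
  have Hxv : snark_adj x (vt x.1 t) by apply: star => //; [exact: (eqP Hx) | rewrite E].
  have Hd : dist_set (vt x.1 t) Y <= 1.
    rewrite -(H _ HvS); apply: leq_trans (dset_le _ HxX) _.
    apply: dist_adj1 => //; by rewrite adjC.
  have [y HyY Hy] := dset_le1 P Hd.
  have Hy2 : y.2 != 1 :> nat.
    apply/negP => /eqP Hy1; case: Hy => [Ey|Ha].
      by move: Hy1; rewrite Ey E => E1; rewrite E1 in Ht1.
    have [_ Ey1] := adj_centre Ha Hy1.
    have Exy : y = x by apply/vE; rewrite -Ey1 /= Hy1 (eqP Hx).
    by rewrite -Exy HyY in HxY.
  exists y; split => //; apply: HYX => //; by rewrite inS0.
have [y0 [Hy0X Hy02 Hy0]] := Hyt 0 isT isT.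
have [y2 [Hy2X Hy22 Hy2]] := Hyt 2 isT isT.
have [y3 [Hy3X Hy32 Hy3]] := Hyt 3 isT isT.
have Hxy (y : V) : y.2 != 1 :> nat -> x != y.
  by move=> Hy; apply/eqP => E; rewrite -E Hx in Hy.
have D02 : y0 != y2.
  by apply/eqP => E; rewrite -E in Hy2; exact: (distinct_nb (i:=x.1) (t:=0) (t':=2) isT isT isT isT isT Hy02 Hy0 Hy2).
have D03 : y0 != y3.
  by apply/eqP => E; rewrite -E in Hy3; exact: (distinct_nb (i:=x.1) (t:=0) (t':=3) isT isT isT isT isT Hy02 Hy0 Hy3).
have D23 : y2 != y3.
  by apply/eqP => E; rewrite -E in Hy3; exact: (distinct_nb (i:=x.1) (t:=2) (t':=3) isT isT isT isT isT Hy22 Hy2 Hy3).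
have Hu : uniq [:: x; y0; y2; y3].
  rewrite /= !inE !negb_or D02 D03 D23 (Hxy _ Hy02) (Hxy _ Hy22) (Hxy _ Hy32) //.
have Hs : {subset [:: x; y0; y2; y3] <= enum X}.
  move=> z; rewrite mem_enum !inE => /or4P[] /eqP ->; done.
have := uniq_leq_size Hu Hs; move: HX3; rewrite cardE /= => H3 H4; exfalso; lia.
Qed.

Lemma upper : three_resolving S0.
Proof.
move=> X Y HX0 HY0 HX3 HY3 HXY.
case: (boolP [exists x, (x \in X) && (x \notin Y)]).
  by move/existsP => [x /andP[H1 H2]]; apply: (key H1 H2).
move=> N1.
case: (boolP [exists y, (y \in Y) && (y \notin X)]).
  move/existsP => [y /andP[H1 H2]]; have [s Hs Hne] := key H1 H2 HY3.
  by exists s => //; rewrite eq_sym.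
move=> N2; exfalso.
have EXY : X = Y.
  apply/setP => z.
  case: (boolP (z \in X)) => Hz; case: (boolP (z \in Y)) => Hz' //.
    by move/negP: N1; case; apply/existsP; exists z; rewrite Hz Hz'.
  by move/negP: N2; case; apply/existsP; exists z; rewrite Hz Hz'.
by rewrite EXY eqxx in HXY.
Qed.

End M.

Theorem mainTheorem15 (n : nat) :
  5 <= n -> odd n ->
  (exists S : {set vert n}, three_resolving S /\ #|S| = 3 * n) /\
  (forall S : {set vert n}, three_resolving S -> 3 * n <= #|S|).
Proof.
move=> Hn _; split.
  by exists (S0 n); split; [exact: upper | exact: cardS0].
by move=> S HS; apply: (lower Hn HS).
Qed.
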